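(* For every integer $r\ge 2$, every real $c\ge \frac1{r-1}$ and every real $\epsilon>1/c$, there is a hereditary property $\mathcal H$ of $r$-uniform hypergraphs and an infinite set $S\subseteq\mathbb N$ such that $|\mathcal H_n|=n^{(r-1)(c+o(1))n}$ as $n\to\infty$ with $n\in S$, and such that $|\mathcal H_n|\ge 2^{n^{r-\epsilon}}$ for infinitely many $n$.
   Context: A hereditary property of $r$-uniform hypergraphs is a class of finite $r$-uniform hypergraphs closed under isomorphism and under taking induced subhypergraphs. $\mathcal H_n$ denotes the set of members of $\mathcal H$ with vertex set $[n]=\{1,\dots,n\}$. *)

(* Defs.v *)
From mathcomp Require Import all_boot.
From Stdlib Require Import Reals.
Set Implicit Arguments. Unset Strict Implicit.

Definition uniform_hg (r n : nat) (G : {set {set 'I_n}}) : bool :=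
  [forall e in G, #|e| == r].

(* The hypergraph on 'I_m obtained by pulling back G along g : 'I_m -> 'I_n;
   for injective g this is the induced subhypergraph of G on the image of g,
   relabelled via g (covers isomorphic copies when g is a bijection). *)
Definition pullback_hg (m n : nat) (g : 'I_m -> 'I_n) (G : {set {set 'I_n}})
  : {set {set 'I_m}} := [set e : {set 'I_m} | (g @: e) \in G].

(* A property is given by its labelled members P n on each vertex set [n]. *)
Definition hereditary_prop (r : nat) (P : forall n : nat, pred {set {set 'I_n}}) : Prop :=
  (forall n (G : {set {set 'I_n}}), P n G -> uniform_hg r G) /\
  (forall m n (g : 'I_m -> 'I_n), injective g ->
     forall G : {set {set 'I_n}}, P n G -> P m (pullback_hg g G)).

Definition Hn (P : forall n : nat, pred {set {set 'I_n}}) (n : nat) : nat :=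
  #|[set G : {set {set 'I_n}} | P n G]|.

(* Main.v *)
Require Import Defs.
From mathcomp Require Import all_boot.
From Stdlib Require Import Reals.
From Stdlib Require Import Lra Lia ClassicalEpsilon ZArith.
From mathcomp Require Import all_boot zify.
Unset Implicit Arguments.

Lemma ffact_le_exp n m : n ^_ m <= n ^ m.
Proof.
rewrite ffact_prod; apply: (@leq_trans (\prod_(i < m) n)).
  by apply: leq_prod => i _; apply: leq_subr.
by rewrite prod_nat_const card_ord.
Qed.

Lemma exp_le_ffact n m : m <= n -> (n - m) ^ m <= n ^_ m.
Proof.
move=> hmn; rewrite ffact_prod; apply: (@leq_trans (\prod_(i < m) (n - m))).
  by rewrite prod_nat_const card_ord.
apply: leq_prod => i _; apply: leq_sub2l; exact: ltnW (ltn_ord i).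
Qed.

Lemma fact_le_exp m : m`! <= m ^ m.
Proof. by rewrite -ffactnn ffact_le_exp. Qed.

Lemma bin_fact_le n k : 'C(n,k) * k`! <= n ^ k.
Proof. by rewrite bin_ffact ffact_le_exp. Qed.

Lemma bin_le_exp n k : 'C(n,k) <= n ^ k.
Proof.
apply: leq_trans (bin_fact_le n k).
by rewrite -{1}(muln1 'C(n,k)) leq_mul2l fact_gt0 orbT.
Qed.

Lemma bin_sub_ffact M m s : s <= m -> m <= M ->
  'C(M - s, m - s) * M ^_ s = 'C(M, m) * m ^_ s.
Proof.
move=> hsm hmM.
have hpos : 0 < (m - s)`! * (M - m)`! by rewrite muln_gt0 !fact_gt0.
apply/eqP; rewrite -(eqn_pmul2r hpos); apply/eqP.
have e1 : (M - s) - (m - s) = M - m by lia.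
have h1 := bin_fact (leq_sub2r s hmM). rewrite e1 in h1.
have h2 := ffact_fact (leq_trans hsm hmM).
have h3 := bin_fact hmM.
have h4 := ffact_fact hsm.
transitivity ('C(M - s, m - s) * ((m - s)`! * (M - m)`!) * M ^_ s).
  by rewrite mulnAC.
rewrite h1 mulnC h2.
transitivity ('C(M, m) * ((m ^_ s * (m - s)`!) * (M - m)`!)).
  by rewrite h4 h3.
by rewrite !mulnA.
Qed.

Lemma bin_sub_bound M m s : m <= M ->
  'C(M - s, m - s) * (s <= m) * (M - s) ^ s <= 'C(M, m) * m ^ s.
Proof.
move=> hmM; case: (leqP s m) => hsm; last by rewrite muln0 mul0n.
rewrite muln1.
apply: (@leq_trans ('C(M - s, m - s) * M ^_ s)).
  by rewrite leq_mul2l exp_le_ffact ?orbT // (leq_trans hsm hmM).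
by rewrite bin_sub_ffact // leq_mul2l ffact_le_exp orbT.
Qed.

Lemma bin_lower M m : m <= M -> (M - m) ^ m <= 'C(M, m) * m ^ m.
Proof.
move=> hmM; apply: (@leq_trans (M ^_ m)); first exact: exp_le_ffact.
by rewrite -bin_ffact leq_mul2l fact_le_exp orbT.
Qed.

Lemma bin_fact_le2 M j T : j <= T -> T <= M -> 'C(M, j) * T`! <= M ^ T.
Proof.
move=> hjT; elim: T hjT => [|T IH].
  by rewrite leqn0 => /eqP -> _; rewrite bin0 fact0.
rewrite leq_eqVlt => /orP [/eqP <- _|hj hTM]; first exact: bin_fact_le.
rewrite factS mulnCA expnS.
apply: leq_mul => //; apply: IH => //; exact: ltnW.
Qed.

Lemma sum_bin_le M T : T <= M -> (\sum_(j < T.+1) 'C(M, j)) * T`! <= T.+1 * M ^ T.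
Proof.
move=> hTM; rewrite big_distrl /=.
apply: (@leq_trans (\sum_(j < T.+1) M ^ T)).
  apply: leq_sum => j _; apply: bin_fact_le2 => //; by rewrite -ltnS.
by rewrite sum_nat_const card_ord.
Qed.

Set Implicit Arguments. Unset Strict Implicit. Unset Printing Implicit Defensive.

Section HG.
Variable r : nat.

Definition rsets n : {set {set 'I_n}} := [set e : {set 'I_n} | #|e| == r].
Definition rin n (U : {set 'I_n}) : {set {set 'I_n}} := [set e : {set 'I_n} | e \subset U & #|e| == r].
Definition ein n (E : {set {set 'I_n}}) (U : {set 'I_n}) : nat := #|[set e in E | e \subset U]|.
Definition allm n m := [set E : {set {set 'I_n}} | E \subset rsets n & #|E| == m].
Definition goodset n m K (t : nat -> nat) :=
  [set E in allm n m | [forall U : {set 'I_n}, (#|U| <= K) ==> (ein E U < t #|U|)]].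

Lemma card_rsets n : #|rsets n| = 'C(n, r).
Proof. by rewrite /rsets card_draws card_ord. Qed.

Lemma card_rin n (U : {set 'I_n}) : #|rin U| = 'C(#|U|, r).
Proof. by rewrite /rin cards_draws. Qed.

Lemma card_allm n m : #|allm n m| = 'C('C(n, r), m).
Proof. by rewrite /allm cards_draws card_rsets. Qed.

Lemma card_containing n m (T : {set {set 'I_n}}) :
  T \subset rsets n ->
  #|[set E in allm n m | T \subset E]| <= 'C('C(n, r) - #|T|, m - #|T|) * (#|T| <= m).
Proof.
move=> hT.
case: (leqP #|T| m) => hsm; last first.
  rewrite muln0 leqn0 cards_eq0; apply/eqP/setP => E; rewrite !inE.
  apply/negbTE; apply/negP => /andP [/andP [_ /eqP hE] hTE].
  have := subset_leq_card hTE; rewrite hE; lia.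
rewrite muln1.
set D := [set E in allm n m | T \subset E].
have inj : {in D &, injective (fun E => E :\: T)}.
  move=> E1 E2; rewrite !inE => /andP [_ h1] /andP [_ h2] heq.
  by rewrite -(setID E1 T) -(setID E2 T) (setIidPr h1) (setIidPr h2) heq.
rewrite -(card_in_imset inj).
apply: (@leq_trans #|[set A : {set {set 'I_n}} | A \subset rsets n :\: T & #|A| == m - #|T|]|).
  apply: subset_leq_card; apply/subsetP => A /imsetP [E]; rewrite !inE => /andP [/andP [hER /eqP hEm] hTE] ->.
  rewrite setSD //=.
  have := cardsID T E; rewrite (setIidPr hTE) hEm => <-.
  by rewrite addKn.
rewrite cards_draws cardsD card_rsets (setIidPr hT).
done.
Qed.

End HG.

Lemma leq_sum_sub (I : finType) (A B : pred I) (f : I -> nat) :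
  (forall i, A i -> B i) -> \sum_(i | A i) f i <= \sum_(i | B i) f i.
Proof.
move=> hAB; rewrite (big_mkcond A) (big_mkcond B) /=.
apply: leq_sum => i _; case hA: (A i); first by rewrite (hAB _ hA).
by [].
Qed.

Lemma sum_by_size n K (h : nat -> nat) :
  \sum_(U : {set 'I_n} | #|U| <= K) h #|U| = \sum_(k < K.+1) 'C(n, k) * h k.
Proof.
rewrite (partition_big (fun U : {set 'I_n} => (inord #|U| : 'I_K.+1)) xpredT) //=.
apply: eq_bigr => k _.
rewrite (eq_bigl (fun U : {set 'I_n} => #|U| == k)); last first.
  move=> U; apply/andP/eqP.
    by move=> [hU /eqP <-]; rewrite inordK.
  move=> hU; split; first by rewrite hU -ltnS ltn_ord.
  by apply/eqP/val_inj; rewrite /= inordK hU.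
rewrite (eq_bigr (fun _ => h k)); last by move=> U /eqP ->.
rewrite sum_nat_const; congr (_ * _).
by rewrite -[in RHS](card_ord n) -card_draws cardsE.
Qed.

Section FM.
Variable r : nat.

Lemma first_moment n m K (t : nat -> nat) :
  'C('C(n, r), m) <= #|goodset r n m K t| +
     \sum_(k < K.+1) 'C(n, k) * ('C('C(k, r), t k) * ('C('C(n, r) - t k, m - t k) * (t k <= m))).
Proof.
rewrite -card_allm -(cardsID (goodset r n m K t) (allm r n m)).
have -> : allm r n m :&: goodset r n m K t = goodset r n m K t.
  by apply/setIidPr/subsetP => E; rewrite inE => /andP [].
rewrite leq_add2l.
set bad := allm r n m :\: goodset r n m K t.
pose F (E : {set {set 'I_n}}) := \sum_(U : {set 'I_n} | #|U| <= K)
  \sum_(T in [set T : {set {set 'I_n}} | T \subset rin r U & #|T| == t #|U|]) ((T \subset E) : nat).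
apply: (@leq_trans (\sum_(E in bad) F E)).
  rewrite -sum1_card; apply: leq_sum => E; rewrite !inE => /andP [hng hE].
  rewrite hE /= in hng.
  move/forallPn: hng => [U]; rewrite negb_imply -leqNgt => /andP [hUK htU].
  rewrite /F (bigD1 U) //=; apply: leq_trans (leq_addr _ _).
  set X := [set e in E | e \subset U].
  apply: (@leq_trans (\sum_(T in [set T : {set {set 'I_n}} | T \subset X & #|T| == t #|U|]) 1)).
    by rewrite sum1_card cards_draws bin_gt0.
  rewrite big_mkcond [X in _ <= X]big_mkcond /=; apply: leq_sum => T _.
  rewrite !inE; case hT: (T \subset X) => //=; case: (#|T| == t #|U|) => //=.
  have hTE : T \subset E by apply: subset_trans hT _; apply/subsetP => e; rewrite inE => /andP [].
  have hTr : T \subset rin r U.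
    apply/subsetP => e he; move/subsetP: hT => /(_ e he); rewrite !inE => /andP [heE ->].
    move: hE => /andP [/subsetP hER _]; by move: (hER e heE); rewrite inE => ->.
  by rewrite hTr hTE.
apply: (@leq_trans (\sum_(E in allm r n m) F E)).
  by apply: leq_sum_sub => E; rewrite inE => /andP [].
rewrite /F exchange_big /=.
rewrite -(sum_by_size n K (fun k => 'C('C(k, r), t k) * ('C('C(n, r) - t k, m - t k) * (t k <= m)))).
apply: leq_sum => U hU.
rewrite exchange_big /=.
apply: (@leq_trans (\sum_(T in [set T : {set {set 'I_n}} | T \subset rin r U & #|T| == t #|U|])
                    ('C('C(n, r) - t #|U|, m - t #|U|) * (t #|U| <= m)))).
  apply: leq_sum => T; rewrite inE => /andP [hTU /eqP hTc].
  rewrite -big_mkcondr /= sum1_card -hTc.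
  have hTR : T \subset rsets r n.
    apply: subset_trans hTU _; apply/subsetP => e; rewrite !inE => /andP [_ ->].
    done.
  apply: leq_trans (card_containing m hTR).
  apply: subset_leq_card; apply/subsetP => E; rewrite unfold_in /= !inE. done.
by rewrite sum_nat_const (cards_draws (rin r U)) card_rin.
Qed.

End FM.

Section H3.
Variable r : nat.

Lemma card_small n T :
  #|[set E : {set {set 'I_n}} | E \subset rsets r n & #|E| <= T]| <= \sum_(j < T.+1) 'C('C(n, r), j).
Proof.
rewrite -sum1_card.
rewrite (partition_big (fun E : {set {set 'I_n}} => (inord #|E| : 'I_T.+1)) xpredT) //=.
apply: leq_sum => j _.
have h : \sum_(i in [set E : {set {set 'I_n}} | E \subset rsets r n & #|E| <= T] | inord #|i| == j) 1
   <= \sum_(E : {set {set 'I_n}} | (E \subset rsets r n) && (#|E| == j)) 1.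
  apply: leq_sum_sub => E; rewrite inE => /andP [/andP [hE hT] /eqP <-].
  by rewrite hE /= inordK ?ltnS.
apply: leq_trans h _.
by rewrite sum1_card -cardsE (cards_draws (rsets r n)) card_rsets.
Qed.

Lemma uniformE n (G : {set {set 'I_n}}) : uniform_hg r G = (G \subset rsets r n).
Proof.
apply/idP/idP.
  move/forall_inP => h; apply/subsetP => e he; by rewrite inE h.
move/subsetP => h; apply/forall_inP => e he; by move: (h e he); rewrite inE.
Qed.

Lemma pullback_uniform m n (g : 'I_m -> 'I_n) (G : {set {set 'I_n}}) :
  injective g -> G \subset rsets r n -> pullback_hg g G \subset rsets r m.
Proof.
move=> ig /subsetP hG; apply/subsetP => e; rewrite /pullback_hg inE => he.
by move: (hG _ he); rewrite !inE card_imset.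
Qed.

Lemma pullback_ein m n (g : 'I_m -> 'I_n) (G : {set {set 'I_n}}) (U : {set 'I_m}) :
  injective g -> ein (pullback_hg g G) U <= ein G (g @: U).
Proof.
move=> ig; rewrite /ein.
rewrite -(card_imset _ (imset_inj ig)).
apply: subset_leq_card; apply/subsetP => f /imsetP [e]; rewrite !inE => /andP [he heU] ->.
by rewrite he imsetS.
Qed.

End H3.

Open Scope R_scope.

Lemma INR_muln a b : INR (a * b)%N = INR a * INR b. Proof. exact: mult_INR. Qed.
Lemma INR_addn a b : INR (a + b)%N = INR a + INR b. Proof. exact: plus_INR. Qed.
Lemma INR_expn a b : INR (a ^ b)%N = INR a ^ b.
Proof. elim: b => [|b IH]; first by []. by rewrite expnS INR_muln IH. Qed.
Lemma INR_lenP a b : (a <= b)%N -> INR a <= INR b.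
Proof. move/leP; exact: le_INR. Qed.
Lemma INR_lenP' a b : INR a <= INR b -> (a <= b)%N.
Proof. move/INR_le; by move/leP. Qed.
Lemma INR_ltnP a b : (a < b)%N -> INR a < INR b.
Proof. move/ltP; exact: lt_INR. Qed.
Lemma INR_ltnP' a b : INR a < INR b -> (a < b)%N.
Proof. move/INR_lt; by move/ltP. Qed.

Lemma ln_le x y : 0 < x -> x <= y -> ln x <= ln y.
Proof. move=> hx [hxy|<-]; [left; exact: ln_increasing | lra]. Qed.
Lemma exp_le x y : x <= y -> exp x <= exp y.
Proof. move=> [hxy|<-]; [left; exact: exp_increasing | lra]. Qed.
Lemma ln_le_self x : 0 < x -> ln x <= x - 1.
Proof.
move=> hx.
have := exp_ineq1_le (ln x).
rewrite exp_ln //; lra.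
Qed.

Definition cl (x : R) : nat := Z.to_nat (up x).
Definition fl (x : R) : nat := (cl x).-1.

Lemma cl_spec x : 0 <= x -> x < INR (cl x) <= x + 1.
Proof.
move=> hx; rewrite /cl. have [h1 h2] := archimed x.
have hz : (0 <= up x)%Z by apply: le_IZR; lra.
rewrite INR_IZR_INZ Z2Nat.id //; lra.
Qed.

Lemma cl_pos x : 0 <= x -> (0 < cl x)%N.
Proof. move=> hx; have [h1 _] := cl_spec hx; apply: INR_ltnP'; simpl; lra. Qed.

Lemma fl_spec x : 0 <= x -> INR (fl x) <= x < INR (fl x) + 1.
Proof.
move=> hx; have [h1 h2] := cl_spec hx. have hp := cl_pos hx.
have e : INR (cl x) = INR (fl x) + 1.
  by rewrite /fl -[in LHS](prednK hp) -addn1 INR_addn.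
have hz : IZR (up x) - 1 <= x.
  have [a b] := archimed x; lra.
split; last lra.
have : INR (cl x) = IZR (up x).
  rewrite /cl INR_IZR_INZ Z2Nat.id //. apply: le_IZR; have [a b] := archimed x; lra.
lra.
Qed.

Lemma ev_ln (A : R) : exists N, forall n : nat, (N <= n)%N -> A <= ln (INR n) /\ 1 <= INR n.
Proof.
exists (maxn 1 (cl (exp A))) => n hn.
have h1 : (1 <= n)%N by apply: leq_trans hn; exact: leq_maxl.
have h2 : (cl (exp A) <= n)%N by apply: leq_trans hn; exact: leq_maxr.
have [a _] := cl_spec (Rlt_le _ _ (exp_pos A)).
have := INR_lenP h2; have := INR_lenP h1 => /= H1 H2.
split; last lra.
rewrite -[A]ln_exp; apply: ln_le; [exact: exp_pos | lra].
Qed.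

Lemma ev_pow (A g : R) : 0 < g -> exists N, forall n : nat, (N <= n)%N -> A <= Rpower (INR n) g /\ 1 <= INR n.
Proof.
move=> hg; have [N hN] := ev_ln (Rabs (ln (Rabs A + 1)) / g).
exists N => n hn; have [h1 h2] := hN n hn; split => //.
case: (Rle_lt_dec A 0) => hA.
  rewrite /Rpower; have hh := exp_pos (g * ln (INR n)); lra.
rewrite /Rpower -[A]exp_ln //; apply: exp_le.
have e1 : ln A <= ln (Rabs A + 1) by apply: ln_le; [lra| rewrite Rabs_right; lra].
have e2 := Rle_abs (ln (Rabs A + 1)).
have : Rabs (ln (Rabs A + 1)) / g * g <= ln (INR n) * g by apply: Rmult_le_compat_r; lra.
have -> : Rabs (ln (Rabs A + 1)) / g * g = Rabs (ln (Rabs A + 1)) by field; lra.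
rewrite (Rmult_comm g); lra.
Qed.

Lemma ev_nat (a : nat) : exists N, forall n : nat, (N <= n)%N -> (a <= n)%N.
Proof. by exists a. Qed.

Lemma ev_and (P Q : nat -> Prop) :
  (exists N, forall n, (N <= n)%N -> P n) -> (exists N, forall n, (N <= n)%N -> Q n) ->
  exists N, forall n, (N <= n)%N -> P n /\ Q n.
Proof.
move=> [N1 h1] [N2 h2]; exists (maxn N1 N2) => n hn; split.
  apply: h1; apply: leq_trans hn; exact: leq_maxl.
apply: h2; apply: leq_trans hn; exact: leq_maxr.
Qed.

Lemma exp_pow_nat x n : exp x ^ n = exp (INR n * x).
Proof.
elim: n => [|n IH]; first by rewrite /= Rmult_0_l exp_0.
by rewrite [exp x ^ n.+1]/= IH -exp_plus S_INR; congr exp; ring.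
Qed.

Lemma one_plus_pow T : (1 <= T)%N -> INR T.+1 ^ T <= exp 1 * INR T ^ T.
Proof.
move=> hT; have hT' : 1 <= INR T by apply: (INR_lenP hT).
have e : INR T.+1 = INR T * (1 + / INR T) by rewrite S_INR; field; lra.
rewrite e Rpow_mult_distr [exp 1 * _]Rmult_comm; apply: Rmult_le_compat_l.
  apply: pow_le; lra.
apply: (Rle_trans _ (exp (/ INR T) ^ T)).
  apply: pow_incr; split; last exact: exp_ineq1_le.
  have hh : 0 < / INR T by apply: Rinv_0_lt_compat; lra.
  lra.
rewrite exp_pow_nat; right; congr exp; field; lra.
Qed.

Lemma fact_lower T : INR T ^ T <= INR (T`!) * exp (INR T).
Proof.
elim: T => [|T IH]; first by rewrite /= exp_0; lra.
case: (posnP T) => [->|hT].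
  rewrite /= !Rmult_1_r. have := exp_ineq1_le 1. lra.
rewrite factS INR_muln -tech_pow_Rmult [in exp _]S_INR exp_plus.
have h1 := one_plus_pow hT.
have hp : 0 < INR T.+1 by apply: lt_0_INR; apply/ltP.
have he : 0 < exp 1 := exp_pos 1.
apply: (Rle_trans _ (INR T.+1 * (exp 1 * INR T ^ T))).
  apply: Rmult_le_compat_l; first lra. exact: h1.
apply: (Rle_trans _ (INR T.+1 * (exp 1 * (INR T`! * exp (INR T))))).
  apply: Rmult_le_compat_l; first lra. apply: Rmult_le_compat_l; lra.
right; ring.
Qed.

Lemma pow_exp x n : 0 < x -> x ^ n = exp (INR n * ln x).
Proof. move=> hx; by rewrite -exp_pow_nat exp_ln. Qed.

Lemma ln_ge0 x : 1 <= x -> 0 <= ln x.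
Proof. move=> hx; rewrite -ln_1; apply: ln_le; lra. Qed.

Lemma bin_lower_nat n r : (2 * r <= n)%N -> (n ^ r <= 'C(n, r) * (2 ^ r * r`!))%N.
Proof.
move=> h.
have h1 : (r <= n)%N by lia.
rewrite mulnCA bin_ffact.
apply: (@leq_trans (2 ^ r * (n - r) ^ r)).
  rewrite -expnMn; case: (posnP r) => [->|hr0]; first by []. rewrite leq_exp2r //; lia.
by rewrite leq_mul2l exp_le_ffact ?orbT.
Qed.

Section Main.
Variables (r : nat) (c eps : R).
Hypothesis hr : (2 <= r)%N.
Hypothesis hc : 1 / (INR r - 1) <= c.
Hypothesis heps : 1 / c < eps.

Lemma r1_pos : 1 <= INR r - 1.
Proof. have := INR_lenP hr; simpl; lra. Qed.

Lemma c_pos : 0 < c.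
Proof.
have h := r1_pos. have : 0 < 1 / (INR r - 1) by apply: Rdiv_lt_0_compat; lra. lra.
Qed.

Definition tt (k : nat) : nat := cl (c * INR k).

Lemma tt_spec k : c * INR k < INR (tt k) <= c * INR k + 1.
Proof. apply: cl_spec; have := c_pos; have := pos_INR k; nra. Qed.

Lemma tt_pos k : (0 < tt k)%N.
Proof. apply: cl_pos; have := c_pos; have := pos_INR k; nra. Qed.

Lemma tt_lt e k : (e < tt k)%N -> INR e <= c * INR k.
Proof.
move=> h; have := INR_lenP h; rewrite -addn1 INR_addn /=.
have := tt_spec k; lra.
Qed.

Lemma lt_tt e k : INR e <= c * INR k -> (e < tt k)%N.
Proof. move=> h; apply: INR_ltnP'; have := tt_spec k; lra. Qed.

Lemma INR_ttm1 n : INR (tt n).-1 = INR (tt n) - 1.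
Proof.
have h := tt_pos n.
rewrite -[in RHS](prednK h) -addn1 INR_addn /=; ring.
Qed.

Lemma M_lower n : (2 * r <= n)%N -> INR n ^ r <= INR 'C(n, r) * (2 ^ r * INR r`!).
Proof.
move=> h; have := INR_lenP (bin_lower_nat h).
by rewrite !INR_muln !INR_expn.
Qed.

Lemma UpS (delta : R) : 0 < delta -> exists N, forall n : nat, (N <= n)%N ->
  INR #|[set E : {set {set 'I_n}} | E \subset rsets r n & (#|E| <= (tt n).-1)%N]|
   <= Rpower (INR n) ((INR r - 1) * (c + delta) * INR n).
Proof.
move=> hd.
have hc0 := c_pos. have hr1 := r1_pos.
set A := Rabs (1 - ln (c / 2)).
set K0 := 2 ^ r * INR r`!.
have hK0 : 1 <= K0.
  rewrite /K0; have h1 : 1 <= 2 ^ r by apply: pow_R1_Rle; lra.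
  have h2 : 1 <= INR r`! by have := INR_lenP (fact_gt0 r); simpl; lra.
  nra.
have [N1 hN1] := ev_ln (c * (1 + A) / ((INR r - 1) * delta)).
have [N2 hN2] := ev_ln (2 / c + c * K0 + INR (2 * r)).
exists (maxn N1 N2) => n hn.
have [hL hn1] := hN1 n (leq_trans (leq_maxl _ _) hn).
have [hL2 _] := hN2 n (leq_trans (leq_maxr _ _) hn).
set L := ln (INR n) in hL hL2.
have hL0 : 0 <= L by apply: ln_ge0.
have hnL : L <= INR n - 1 by apply: ln_le_self; lra.
have hnbig : 2 / c + c * K0 + INR (2 * r) <= INR n by lra.
have h2c : 2 <= c * INR n.
  have hp1 := pos_INR (2 * r).
  have hp2 : 0 <= c * K0 by nra.
  have h : 2 / c <= INR n by lra.
  have h' : c * (2 / c) <= c * INR n by apply: Rmult_le_compat_l; lra.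
  have e : c * (2 / c) = 2 by field; lra.
  lra.
set T := (tt n).-1.
have hT : INR T = INR (tt n) - 1 by apply: INR_ttm1.
have [ht1 ht2] := tt_spec n.
have hTl : c * INR n / 2 <= INR T by lra.
have hTu : INR T <= c * INR n by lra.
have hT1 : 1 <= INR T by lra.
set M := 'C(n, r).
have h2c0 : 0 < 2 / c by apply: Rdiv_lt_0_compat; lra.
have hcK0 : 0 <= c * K0 by nra.
have h2r : (2 * r <= n)%N by apply: INR_lenP'; lra.
have hM := M_lower h2r. rewrite -/K0 -/M in hM.
have hnr : INR n * INR n <= INR n ^ r.
  have -> : INR n * INR n = INR n ^ 2 by ring.
  apply: Rle_pow; [lra | by apply/leP].
have hTM : (T <= M)%N.
  apply: INR_lenP'.
  have hp1 := pos_INR (2 * r).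
  have h1 : c * K0 * INR n <= INR n * INR n by apply: Rmult_le_compat_r; lra.
  have h2 : INR T * K0 <= c * INR n * K0 by apply: Rmult_le_compat_r; lra.
  have h3 : INR T * K0 <= INR M * K0 by lra.
  apply: (Rmult_le_reg_r K0); lra.
have hcard := card_small r n T.
have hsum := @sum_bin_le M T hTM.
set Sg := \sum_(j < T.+1) 'C(M, j) in hcard hsum.
have hMn : (M <= n ^ r)%N by apply: bin_le_exp.
have hSg : INR Sg * INR T`! <= INR T.+1 * INR n ^ (r * T).
  have := INR_lenP hsum; rewrite !INR_muln INR_expn => h.
  apply: (Rle_trans _ _ _ h); apply: Rmult_le_compat_l; first exact: pos_INR.
  rewrite pow_mult; apply: pow_incr; split; first exact: pos_INR.
  by have := INR_lenP hMn; rewrite INR_expn.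
have hfact := fact_lower T.
have hTT : 0 < INR T ^ T by apply: pow_lt; lra.
have hfp : 0 < INR T`! by have := INR_ltnP (fact_gt0 T).
have hSg2 : INR Sg * INR T ^ T <= INR T.+1 * INR n ^ (r * T) * exp (INR T).
  apply: (Rle_trans _ (INR Sg * (INR T`! * exp (INR T)))).
    apply: Rmult_le_compat_l; [exact: pos_INR | exact: hfact].
  rewrite -Rmult_assoc; apply: Rmult_le_compat_r; [left; exact: exp_pos | exact: hSg].
have hn0 : 0 < INR n by lra.
have hT0 : 0 < INR T by lra.
rewrite (pow_exp _ hn0) (pow_exp _ hT0) in hSg2.
rewrite -[INR T.+1]exp_ln in hSg2; last by rewrite S_INR; lra.
rewrite -!exp_plus in hSg2.
apply: (Rle_trans _ (INR Sg)); first exact: INR_lenP hcard.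
rewrite /Rpower.
set X := INR T * ln (INR T).
have hX : INR Sg <= exp (ln (INR T.+1) + INR (r * T) * L + INR T - X).
  have hXp : 0 < exp X := exp_pos X.
  apply: (Rmult_le_reg_r (exp X)) => //.
  rewrite -exp_plus. have -> : ln (INR T.+1) + INR (r * T) * L + INR T - X + X = ln (INR T.+1) + INR (r * T) * L + INR T by ring.
  exact: hSg2.
apply: (Rle_trans _ _ _ hX); apply: exp_le.
have hlnT : ln (c / 2) + L <= ln (INR T).
  rewrite /L -ln_mult; [|have := c_pos; lra|lra]. apply: ln_le; [have := c_pos; nra | lra].
have hX2 : INR T * (ln (c / 2) + L) <= X by apply: Rmult_le_compat_l; lra.
have hln1 : ln (INR T.+1) <= INR T by have := ln_le_self (x:=INR T.+1); rewrite S_INR; lra.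
rewrite INR_muln.
have hA : 1 - ln (c / 2) <= A by apply: Rle_abs.
have hA0 : 0 <= A by apply: Rabs_pos.
have k1 : INR T * (1 - ln (c / 2)) <= c * INR n * A.
  apply: (Rle_trans _ (INR T * A)); first by apply: Rmult_le_compat_l; lra.
  apply: Rmult_le_compat_r; lra.
have k2 : INR T * L <= c * INR n * L by apply: Rmult_le_compat_r; lra.
have k3 : c * (1 + A) <= (INR r - 1) * delta * L.
  have : c * (1 + A) / ((INR r - 1) * delta) * ((INR r - 1) * delta) <= L * ((INR r - 1) * delta).
    apply: Rmult_le_compat_r; nra.
  have -> : c * (1 + A) / ((INR r - 1) * delta) * ((INR r - 1) * delta) = c * (1 + A) by field; nra.
  lra.
have k4 : c * (1 + A) * INR n <= (INR r - 1) * delta * L * INR n by apply: Rmult_le_compat_r; lra.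
have k5 : (INR r - 1) * (INR T * L) <= (INR r - 1) * (c * INR n * L) by apply: Rmult_le_compat_l; lra.
have er : INR r * INR T * L = (INR r - 1) * (INR T * L) + INR T * L by ring.
rewrite -/L; lra.
Qed.

End Main.

Lemma up_mono x y : x <= y -> (up x <= up y)%Z.
Proof.
move=> hxy; have [a1 a2] := archimed x; have [b1 b2] := archimed y.
apply: Znot_gt_le => hgt.
have : (up y <= up x - 1)%Z by lia.
move/IZR_le; rewrite minus_IZR /=; lra.
Qed.

Lemma cl_mono x y : x <= y -> (cl x <= cl y)%N.
Proof. move=> h; apply/leP; rewrite /cl; have := up_mono h; lia. Qed.

Section Main2.
Variables (r : nat) (c eps : R).
Hypothesis hr : (2 <= r)%N.
Hypothesis hc : 1 / (INR r - 1) <= c.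
Hypothesis heps : 1 / c < eps.

Local Notation tt := (tt c).

Lemma tt_mono k K : (k <= K)%N -> (tt k <= tt K)%N.
Proof.
move=> h; apply: cl_mono; apply: Rmult_le_compat_l; first by have := c_pos hr hc; lra.
exact: INR_lenP.
Qed.

Lemma goodhalf n m K :
  (2 * tt K <= 'C(n, r))%N -> (m <= 'C(n, r))%N ->
  (forall k, (k <= K)%N -> (2 * K.+1 * (n ^ k * ('C(k, r) * m) ^ tt k) <= ('C(n, r) - tt k) ^ tt k)%N) ->
  ('C('C(n, r), m) <= 2 * #|goodset r n m K tt|)%N.
Proof.
move=> hKM hmM hk.
set M := 'C(n, r) in hKM hmM hk *.
have hfm := first_moment r n m K tt. rewrite -/M in hfm.
set Sm := \sum_(k < K.+1) _ in hfm.
suff h2 : (2 * Sm <= 'C(M, m))%N by lia.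
have hterm : forall k : 'I_K.+1,
  (2 * K.+1 * ('C(n, k) * ('C('C(k, r), tt k) * ('C(M - tt k, m - tt k) * (tt k <= m)))) <= 'C(M, m))%N.
  move=> k; have hkK : (k <= K)%N by rewrite -ltnS.
  set t := tt k.
  have htM : (0 < M - t)%N.
    have := tt_mono hkK; have := tt_pos hr hc K; rewrite -/t; lia.
  have hpos : (0 < (M - t) ^ t)%N by rewrite expn_gt0 htM.
  rewrite -(leq_pmul2r hpos).
  have hb := bin_sub_bound M m t hmM.
  apply: (@leq_trans (2 * K.+1 * (n ^ k * ('C(k, r) ^ t * ('C(M, m) * m ^ t))))).
    rewrite -!mulnA; apply: leq_mul => //; apply: leq_mul => //.
    apply: leq_mul; first exact: bin_le_exp.
    apply: leq_mul; first exact: bin_le_exp. rewrite mulnA.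
    exact: hb.
  have e : (2 * K.+1 * (n ^ k * ('C(k, r) ^ t * ('C(M, m) * m ^ t)))
      = 'C(M, m) * (2 * K.+1 * (n ^ k * ('C(k, r) * m) ^ t)))%N.
    rewrite expnMn; lia.
  rewrite e; apply: leq_mul => //; exact: hk.
have : (K.+1 * (2 * Sm) <= K.+1 * 'C(M, m))%N.
  have -> : (K.+1 * 'C(M, m) = \sum_(k < K.+1) 'C(M, m))%N by rewrite sum_nat_const card_ord.
  rewrite /Sm big_distrr /= big_distrr /=.
  apply: leq_sum => k _; have := hterm k; lia.
by rewrite leq_mul2l.
Qed.

End Main2.

Section Main3.
Variables (r : nat) (c eps : R).
Hypothesis hr : (2 <= r)%N.
Hypothesis hc : 1 / (INR r - 1) <= c.
Hypothesis heps : 1 / c < eps.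
Local Notation tt := (tt c).

Definition K0 := 2 ^ r * INR r`!.

Lemma K0_ge1 : 1 <= K0.
Proof.
rewrite /K0; have h1 : 1 <= 2 ^ r by apply: pow_R1_Rle; lra.
have h2 : 1 <= INR r`! by have := INR_lenP (fact_gt0 r); simpl; lra.
nra.
Qed.

Lemma cond_real n m K (rho : R) :
  (2 * r <= n)%N -> (2 * tt K <= 'C(n, r))%N -> INR m <= rho ->
  (forall k, (k <= K)%N -> 2 * INR K.+1 * INR n ^ k * (2 * K0 * INR K ^ r * rho / INR n ^ r) ^ tt k <= 1) ->
  forall k, (k <= K)%N -> (2 * K.+1 * (n ^ k * ('C(k, r) * m) ^ tt k) <= ('C(n, r) - tt k) ^ tt k)%N.
Proof.
move=> h2r hKM hm hW k hk.
have hK0 := K0_ge1.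
set t := tt k. set M := 'C(n, r) in hKM *.
have htK := tt_mono hr hc hk. rewrite -/t in htK.
have hn1 : 1 <= INR n by have := INR_lenP h2r; rewrite INR_muln /=; have := INR_lenP hr; simpl; nra.
have hM := M_lower h2r. rewrite -/M in hM. change (2 ^ r * INR r`!) with K0 in hM.
have hrho : 0 <= rho by have := pos_INR m; lra.
set Q := INR n ^ r / (2 * K0).
have hnr : 0 < INR n ^ r by apply: pow_lt; lra.
have hQ : 0 < Q by apply: Rdiv_lt_0_compat; lra.
have hMt : Q <= INR (M - t).
  have h2t : (2 * t <= M)%N by apply: leq_trans hKM; rewrite leq_mul2l htK orbT.
  have e : INR (M - t) = INR M - INR t by rewrite minus_INR //; apply/leP; lia.
  have := INR_lenP h2t; rewrite INR_muln /= => h2t'.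
  rewrite e /Q.
  have : INR n ^ r / (2 * K0) * (2 * K0) <= (INR M - INR t) * (2 * K0).
    have -> : INR n ^ r / (2 * K0) * (2 * K0) = INR n ^ r by field; lra.
    nra.
  move=> h; apply: (Rmult_le_reg_r (2 * K0)); lra.
apply: INR_lenP'.
rewrite !INR_muln !INR_expn INR_muln.
apply: (Rle_trans _ (2 * INR K.+1 * (INR n ^ k * (INR K ^ r * rho) ^ t))).
  rewrite -!Rmult_assoc; apply: Rmult_le_compat_l.
    have h1 := pos_INR K.+1. have h2 : 0 <= INR n ^ k by apply: pow_le; exact: pos_INR.
    have h3 : INR 2 = 2 by []. rewrite h3. nra.
  apply: pow_incr; split.
    apply: Rmult_le_pos; apply: pos_INR.
  apply: Rmult_le_compat; try apply: pos_INR; last exact: hm.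
  apply: (Rle_trans _ (INR k ^ r)).
    by have := INR_lenP (bin_le_exp k r); rewrite INR_expn.
  apply: pow_incr; split; [exact: pos_INR | exact: INR_lenP].
apply: (Rle_trans _ (Q ^ t)); last by apply: pow_incr; lra.
have hWk := hW k hk. rewrite -/t in hWk.
have eW : 2 * K0 * INR K ^ r * rho / INR n ^ r = INR K ^ r * rho / Q by rewrite /Q; field; split; lra.
rewrite eW in hWk.
have ediv : (INR K ^ r * rho / Q) ^ t = (INR K ^ r * rho) ^ t / Q ^ t.
  by rewrite /Rdiv Rpow_mult_distr pow_inv.
rewrite ediv in hWk.
have hQt : 0 < Q ^ t by apply: pow_lt.
have : 2 * INR K.+1 * INR n ^ k * ((INR K ^ r * rho) ^ t / Q ^ t) * Q ^ t <= 1 * Q ^ t.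
  by apply: Rmult_le_compat_r; lra.
have -> : 2 * INR K.+1 * INR n ^ k * ((INR K ^ r * rho) ^ t / Q ^ t) * Q ^ t
   = 2 * INR K.+1 * (INR n ^ k * (INR K ^ r * rho) ^ t) by field; lra.
lra.
Qed.

End Main3.

Section Main5.
Variables (r : nat) (c eps : R).
Hypothesis hr : (2 <= r)%N.
Hypothesis hc : 1 / (INR r - 1) <= c.
Hypothesis heps : 1 / c < eps.
Local Notation tt := (tt c).
Local Notation K0 := (K0 r).

Lemma tt_exp k : (k + tt k + 1 <= r * tt k)%N.
Proof.
have hr1 := r1_pos hr. have hc0 := c_pos hr hc.
have [h1 _] := tt_spec hr hc k.
have hk : INR k < (INR r - 1) * INR (tt k).
  have : (INR r - 1) * (c * INR k) < (INR r - 1) * INR (tt k) by apply: Rmult_lt_compat_l; lra.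
  have : INR k <= (INR r - 1) * (c * INR k).
    have e : INR k = (INR r - 1) * (1 / (INR r - 1)) * INR k by field; lra.
    rewrite [X in X <= _]e -Rmult_assoc; apply: Rmult_le_compat_r; first exact: pos_INR.
    apply: Rmult_le_compat_l; lra.
  lra.
have : (k < (r - 1) * tt k)%N.
  apply: INR_ltnP'; rewrite INR_muln minus_INR; last by apply/leP; lia.
  by [].
lia.
Qed.

Lemma mono_est n k (B : R) : (1 <= n)%N -> 0 <= B ->
  INR n ^ k * (B * INR n / INR n ^ r) ^ tt k <= B ^ tt k / INR n.
Proof.
move=> hn hB.
have hn1 : 1 <= INR n by exact: (INR_lenP hn).
set t := tt k.
have hkt := tt_exp k. rewrite -/t in hkt.
have hnr : 0 < INR n ^ r by apply: pow_lt; lra.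
have hrt : INR n ^ (k + t + 1) <= INR n ^ (r * t) by apply: Rle_pow; [lra | apply/leP].
rewrite !pow_add pow_mult /= Rmult_1_r in hrt.
have hnrt : 0 < (INR n ^ r) ^ t by apply: pow_lt.
have e : (B * INR n / INR n ^ r) ^ t = B ^ t * INR n ^ t / (INR n ^ r) ^ t.
  by rewrite /Rdiv !Rpow_mult_distr pow_inv.
rewrite e.
have hBt : 0 <= B ^ t by apply: pow_le.
apply: (Rmult_le_reg_r (INR n * (INR n ^ r) ^ t)); first nra.
have -> : INR n ^ k * (B ^ t * INR n ^ t / (INR n ^ r) ^ t) * (INR n * (INR n ^ r) ^ t)
  = B ^ t * (INR n ^ k * INR n ^ t * INR n) by field; lra.
have -> : B ^ t / INR n * (INR n * (INR n ^ r) ^ t) = B ^ t * (INR n ^ r) ^ t by field; lra.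
apply: Rmult_le_compat_l => //.
Qed.

End Main5.

Lemma Rdiv_le_0_compat a b : 0 <= a -> 0 < b -> 0 <= a / b.
Proof. move=> ha hb; rewrite /Rdiv; apply: Rmult_le_pos => //; left; exact: Rinv_0_lt_compat. Qed.

Section Main6.
Variables (r : nat) (c eps : R).
Hypothesis hr : (2 <= r)%N.
Hypothesis hc : 1 / (INR r - 1) <= c.
Hypothesis heps : 1 / c < eps.
Local Notation tt := (tt c).
Local Notation K0 := (K0 r).

Lemma bin_half_ln n m K : (1 <= m)%N -> (m < 'C(n, r))%N ->
  ('C('C(n, r), m) <= 2 * #|goodset r n m K tt|)%N ->
  INR m * ln (INR ('C(n, r) - m)) - INR m * ln (INR m) - ln 2 <= ln (INR #|goodset r n m K tt|) /\
  (0 < #|goodset r n m K tt|)%N.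
Proof.
move=> hm1 hmM' hh.
set M := 'C(n, r) in hmM' hh *.
have hmM : (m <= M)%N by lia. set G := #|goodset r n m K tt| in hh *.
have hbl := bin_lower M m hmM.
have hCpos : (0 < 'C(M, m))%N by rewrite bin_gt0.
have hG : (0 < G)%N by lia.
split => //.
have hm0 : 0 < INR m by apply: lt_0_INR; apply/ltP.
have hMm : (0 < M - m)%N.
  by lia.
have hMm0 : 0 < INR (M - m) by apply: lt_0_INR; apply/ltP.
have h1 : INR (M - m) ^ m <= INR 'C(M, m) * INR m ^ m.
  by have := INR_lenP hbl; rewrite INR_muln !INR_expn.
have h2 : INR 'C(M, m) <= 2 * INR G by have := INR_lenP hh; rewrite INR_muln.
have hGp : 0 < INR G by apply: lt_0_INR; apply/ltP.
have hl : ln (INR (M - m) ^ m) <= ln (2 * INR G * INR m ^ m).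
  apply: ln_le; first by apply: pow_lt.
  apply: (Rle_trans _ _ _ h1); apply: Rmult_le_compat_r; [apply: pow_le; lra | lra].
rewrite ln_pow // !ln_mult in hl; try lra; try (apply: pow_lt; lra).
rewrite ln_pow // in hl; lra.
Qed.

Lemma LowS (K : nat) (delta : R) : 0 < delta -> delta <= c ->
  exists N, forall n : nat, (N <= n)%N ->
   (fl ((c - delta / 2) * INR n) < tt n)%N /\
   Rpower (INR n) ((INR r - 1) * (c - delta) * INR n)
     <= INR #|goodset r n (fl ((c - delta / 2) * INR n)) K tt|.
Proof.
move=> hd hdc.
have hc0 := c_pos hr hc. have hr1 := r1_pos hr. have hK0 := K0_ge1 r.
set c' := c - delta / 2.
have hc' : c / 2 <= c' /\ c' < c by rewrite /c'; lra.
set a := ln (2 * K0 * c).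
set B := 1 + 2 * K0 * INR K ^ r * c.
have hB : 1 <= B.
  have h0 : 0 <= INR K ^ r by apply: pow_le; exact: pos_INR.
  have hp : 0 <= 2 * K0 * INR K ^ r * c.
    apply: Rmult_le_pos; last lra. apply: Rmult_le_pos => //. apply: Rmult_le_pos; lra.
  rewrite /B; lra.
set TK := INR (tt K).
set bound := 2 * INR K.+1 * B ^ tt K + K0 * (2 * c + 2 * TK + 1) + 4 / c + INR (2 * r) + 1.
set Lb := Rabs a / (INR r - 1) + 2 * (c * Rabs a + INR r + Rabs a + 1) / (delta * (INR r - 1)).
have [N1 hN1] := ev_ln (Lb + bound).
exists N1 => n hn.
have [hL hn1] := hN1 n hn.
set L := ln (INR n) in hL.
have hL0 : 0 <= L by apply: ln_ge0.
have hnL : L <= INR n - 1 by apply: ln_le_self; lra.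
have hLb1 : 0 <= Rabs a / (INR r - 1) by apply: Rdiv_le_0_compat; [exact: Rabs_pos | lra].
have hLb2 : 0 <= 2 * (c * Rabs a + INR r + Rabs a + 1) / (delta * (INR r - 1)).
  apply: Rdiv_le_0_compat; last by nra.
  have := Rabs_pos a; have := pos_INR r; nra.
have hbpos : 0 <= INR (2 * r) /\ 0 < 4 / c /\ 0 <= 2 * INR K.+1 * B ^ tt K /\ 0 <= TK.
  split; first exact: pos_INR. split; first by apply: Rdiv_lt_0_compat; lra.
  split; last exact: pos_INR.
  have := pos_INR K.+1; have : 0 <= B ^ tt K by apply: pow_le; lra. nra.
have hLb : 0 <= Lb by rewrite /Lb; lra.
have hK0p : 0 <= K0 * (2 * c + 2 * TK + 1) by apply: Rmult_le_pos; lra.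
have hnb : bound <= INR n by lra.
rewrite /bound in hnb. case: hbpos => [hb1 [hb2 [hb3 hb4]]].
have hnn0 : 0 < INR n by lra.
set m := fl (c' * INR n).
have [hm1 hm2] := fl_spec (x := c' * INR n) ltac:(nra).
rewrite -/m in hm1 hm2.
have hmc : INR m <= c * INR n by nra.
have hmtt : (m < tt n)%N by apply: (lt_tt hr hc).
split => //.
have hm_ge1 : (1 <= m)%N.
  apply: INR_lenP'; simpl.
  have : 4 / c <= INR n by lra.
  move=> h; have : c * (4 / c) <= c * INR n by apply: Rmult_le_compat_l; lra.
  have -> : c * (4 / c) = 4 by field; lra.
  nra.
have h2r : (2 * r <= n)%N by apply: INR_lenP'; lra.
set M := 'C(n, r).
have hM := M_lower h2r. rewrite -/M in hM. change (2 ^ r * INR r`!) with K0 in hM.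
have hnr : INR n * INR n <= INR n ^ r.
  have -> : INR n * INR n = INR n ^ 2 by ring.
  apply: Rle_pow; [lra | by apply/leP].
have hbigM : 2 * c * INR n + 2 * TK <= INR M.
  have h1 : K0 * (2 * c + 2 * TK + 1) <= INR n by lra.
  have h2 : K0 * (2 * c + 2 * TK + 1) * INR n <= INR n * INR n by apply: Rmult_le_compat_r; lra.
  have h3 : (2 * c + 2 * TK + 1) * INR n <= INR M.
    apply: (Rmult_le_reg_l K0); first lra. nra.
  nra.
have hI2 : INR 2 = 2 by [].
have hTK0 : 0 <= c * INR n by nra.
have hKM : (2 * tt K <= M)%N by apply: INR_lenP'; rewrite INR_muln -/TK hI2; lra.
have hmM : (m <= M)%N by apply: INR_lenP'; lra.
have h2mM : (2 * m <= M)%N by apply: INR_lenP'; rewrite INR_muln hI2; lra.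
have hW : forall k, (k <= K)%N ->
   2 * INR K.+1 * INR n ^ k * (2 * K0 * INR K ^ r * (c * INR n) / INR n ^ r) ^ tt k <= 1.
  move=> k hk.
  set B0 := 2 * K0 * INR K ^ r * c.
  have hB0 : 0 <= B0.
    apply: Rmult_le_pos; last lra. apply: Rmult_le_pos; last by apply: pow_le; exact: pos_INR. lra.
  have e : 2 * K0 * INR K ^ r * (c * INR n) = B0 * INR n by rewrite /B0; ring.
  rewrite e.
  have hn1' : (1 <= n)%N by lia.
  have hme := mono_est hr hc k hn1' hB0.
  have hBt : B0 ^ tt k <= B ^ tt K.
    apply: (Rle_trans _ (B ^ tt k)).
      apply: pow_incr; split => //; rewrite /B /B0; lra.
    apply: Rle_pow => //; apply/leP; exact: (tt_mono hr hc hk).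
  have hK1 : 0 <= 2 * INR K.+1 by have := pos_INR K.+1; lra.
  have h1 : 2 * INR K.+1 * (INR n ^ k * (B0 * INR n / INR n ^ r) ^ tt k) <= 2 * INR K.+1 * (B ^ tt K / INR n).
    apply: Rmult_le_compat_l => //. apply: (Rle_trans _ _ _ hme).
    rewrite /Rdiv; apply: Rmult_le_compat_r => //; left; apply: Rinv_0_lt_compat; lra.
  have h2 : 2 * INR K.+1 * (B ^ tt K / INR n) <= 1.
    apply: (Rmult_le_reg_r (INR n)) => //.
    have -> : 2 * INR K.+1 * (B ^ tt K / INR n) * INR n = 2 * INR K.+1 * B ^ tt K by field; lra.
    lra.
  rewrite Rmult_assoc; lra.
have hcond := @cond_real r c hr hc n m K (c * INR n) h2r hKM hmc hW.
have hh := goodhalf hr hc hKM hmM hcond.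
have hmM' : (m < M)%N by lia.
have [hln hGp] := bin_half_ln hm_ge1 hmM' hh.
set G := #|goodset r n m K tt| in hln hGp *.
rewrite -/M in hln.
have hm0 : 0 < INR m by apply: lt_0_INR; apply/ltP; lia.
have hMm : INR M / 2 <= INR (M - m).
  rewrite minus_INR; last by apply/leP; lia.
  have := INR_lenP h2mM; rewrite INR_muln hI2; lra.
have hMm2 : INR n ^ r / (2 * K0) <= INR (M - m).
  apply: (Rle_trans _ (INR M / 2)) => //.
  apply: (Rmult_le_reg_r (2 * K0)); first lra.
  have -> : INR n ^ r / (2 * K0) * (2 * K0) = INR n ^ r by field; lra.
  have -> : INR M / 2 * (2 * K0) = INR M * K0 by field.
  lra.
have hnrp : 0 < INR n ^ r by apply: pow_lt.
have hl1 : INR r * L - ln (2 * K0) <= ln (INR (M - m)).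
  have h2K : 0 < 2 * K0 by lra.
  have := ln_le (Rdiv_lt_0_compat _ _ hnrp h2K) hMm2.
  rewrite /Rdiv ln_mult // ?ln_Rinv ?ln_pow //; try lra.
  by apply: Rinv_0_lt_compat; lra.
have hl2 : ln (INR m) <= ln c + L.
  rewrite /L -ln_mult; [|lra|lra]. by apply: ln_le.
have ea : a = ln (2 * K0) + ln c by rewrite /a ln_mult; lra.
rewrite /bound /Lb in hL.
have hL1 : Rabs a / (INR r - 1) <= L by lra.
have hX : 0 <= (INR r - 1) * L - a.
  have : Rabs a / (INR r - 1) * (INR r - 1) <= L * (INR r - 1) by apply: Rmult_le_compat_r; lra.
  have -> : Rabs a / (INR r - 1) * (INR r - 1) = Rabs a by field; lra.
  have := Rle_abs a; lra.
set X := (INR r - 1) * L - a in hX.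
have hmX : INR m * X <= INR m * ln (INR (M - m)) - INR m * ln (INR m).
  rewrite -Rmult_minus_distr_l; apply: Rmult_le_compat_l; first lra.
  rewrite /X; lra.
have hmX2 : (c' * INR n - 1) * X <= INR m * X by apply: Rmult_le_compat_r; lra.
have hln2 : ln 2 <= 1 by have := ln_le_self (x := 2); lra.
have hL2 : 2 * (c * Rabs a + INR r + Rabs a + 1) / (delta * (INR r - 1)) <= L by lra.
have hL3 : c * Rabs a + INR r + Rabs a + 1 <= delta / 2 * (INR r - 1) * L.
  have : 2 * (c * Rabs a + INR r + Rabs a + 1) / (delta * (INR r - 1)) * (delta * (INR r - 1))
        <= L * (delta * (INR r - 1)) by apply: Rmult_le_compat_r; nra.
  have -> : 2 * (c * Rabs a + INR r + Rabs a + 1) / (delta * (INR r - 1)) * (delta * (INR r - 1))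
        = 2 * (c * Rabs a + INR r + Rabs a + 1) by field; nra.
  lra.
have hL4 : (c * Rabs a + INR r + Rabs a + 1) * INR n <= delta / 2 * (INR r - 1) * L * INR n.
  by apply: Rmult_le_compat_r; lra.
have ha1 : c' * INR n * a <= c * INR n * Rabs a.
  have h1 := Rle_abs a. have h2 := Rabs_pos a.
  apply: (Rle_trans _ (c' * INR n * Rabs a)); first by apply: Rmult_le_compat_l; nra.
  apply: Rmult_le_compat_r => //; nra.
have ha2 : - a <= Rabs a * INR n.
  have := Rle_abs (- a); rewrite Rabs_Ropp; have := Rabs_pos a; nra.
have hfin : (INR r - 1) * (c - delta) * INR n * L <= ln (INR G).
  have eX : (c' * INR n - 1) * X = c' * INR n * ((INR r - 1) * L) - c' * INR n * a - (INR r - 1) * L + a.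
    by rewrite /X; ring.
  have eC : c' * INR n * ((INR r - 1) * L) = (INR r - 1) * (c - delta) * INR n * L + delta / 2 * (INR r - 1) * L * INR n.
    rewrite /c'; field.
  have hLr : (INR r - 1) * L <= INR r * INR n.
    have h1 : (INR r - 1) * L <= (INR r - 1) * (INR n - 1) by apply: Rmult_le_compat_l; lra.
    have h2 := pos_INR r. lra.
  have s1 : (c' * INR n - 1) * X - ln 2 <= ln (INR G) by lra.
  have s2 : c' * INR n * a + (INR r - 1) * L - a + ln 2 <= delta / 2 * (INR r - 1) * L * INR n by lra.
  lra.
rewrite /Rpower -[INR G]exp_ln; last by apply: lt_0_INR; apply/ltP.
apply: exp_le; rewrite -/L; lra.
Qed.

End Main6.

Lemma Rpower_pos x y : 0 < Rpower x y.
Proof. exact: exp_pos. Qed.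

Lemma Rpower_pow_t x y t : Rpower x y ^ t = Rpower x (INR t * y).
Proof. by rewrite /Rpower exp_pow_nat; congr exp; ring. Qed.

Lemma Rpower_ge1 x y : 1 <= x -> 0 <= y -> 1 <= Rpower x y.
Proof.
move=> hx hy; have h0 : Rpower x 0 = 1 by apply: Rpower_O; lra. rewrite -h0.
by apply: Rle_Rpower.
Qed.

Section Main7.
Variables (r : nat) (c eps : R).
Hypothesis hr : (2 <= r)%N.
Hypothesis hc : 1 / (INR r - 1) <= c.
Hypothesis heps : 1 / c < eps.
Local Notation tt := (tt c).
Local Notation K0 := (K0 r).

Lemma nat_final M m G : (1 <= m)%N -> (4 * m <= M - m)%N -> (m <= M)%N ->
  ((M - m) ^ m <= 'C(M, m) * m ^ m)%N -> ('C(M, m) <= 2 * G)%N -> (2 ^ m <= G)%N.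
Proof.
move=> hm1 h4 hmM hbl hG.
have h1 : (4 ^ m * m ^ m <= 'C(M, m) * m ^ m)%N.
  apply: leq_trans hbl; rewrite -expnMn; case: (posnP m) => [->|hm]; first by [].
  by rewrite leq_exp2r.
rewrite leq_pmul2r ?expn_gt0 ?hm1 // in h1.
have e : (4 ^ m = 2 ^ m * 2 ^ m)%N by rewrite -expnMn.
have h2 : (2 <= 2 ^ m)%N by rewrite -{1}(expn1 2) leq_exp2l.
rewrite e in h1.
have : (2 * 2 ^ m <= 2 * G)%N.
  apply: leq_trans (leq_trans h1 hG); rewrite mulnC leq_mul2l h2 orbT //.
by rewrite leq_mul2l.
Qed.

Lemma Big (K : nat) : exists N, forall n : nat, (N <= n)%N ->
  Rpower 2 (Rpower (INR n) (INR r - eps)) <=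
  INR #|goodset r n (cl (Rpower (INR n) (INR r - Rmin eps (INR r - 1/2)))) K tt|.
Proof.
have hc0 := c_pos hr hc. have hr1 := r1_pos hr. have hK0 := K0_ge1 r.
set e2 := Rmin eps (INR r - 1/2).
have hcr : 1 / c <= INR r - 1.
  have : 1 / (INR r - 1) * (INR r - 1) <= c * (INR r - 1) by apply: Rmult_le_compat_r; lra.
  have -> : 1 / (INR r - 1) * (INR r - 1) = 1 by field; lra.
  move=> h; apply: (Rmult_le_reg_r c) => //.
  have -> : 1 / c * c = 1 by field; lra. lra.
have he2 : 1 / c < e2 by rewrite /e2; apply: Rmin_glb_lt; lra.
have he2r : e2 <= INR r - 1/2 by apply: Rmin_r.
have he2e : e2 <= eps by apply: Rmin_l.
have hic : 0 < 1 / c by apply: Rdiv_lt_0_compat; lra.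
set g := e2 - 1 / c.
have hg : 0 < g by rewrite /g; lra.
set B := 1 + 4 * K0 * INR K ^ r.
have hB : 1 <= B.
  have h0 : 0 <= INR K ^ r by apply: pow_le; exact: pos_INR.
  have : 0 <= 4 * K0 * INR K ^ r by apply: Rmult_le_pos => //; lra.
  rewrite /B; lra.
set TK := INR (tt K).
have hTK : 0 <= TK by exact: pos_INR.
have [N1 hN1] := ev_pow (2 * INR K.+1 * B ^ tt K) hg.
have [N2 hN2] := ev_pow (K0 * (10 + 2 * TK)) (Rlt_le_trans _ _ _ hic (Rlt_le _ _ he2)).
exists (maxn (2 * r) (maxn N1 N2)) => n hn.
have h2r : (2 * r <= n)%N by apply: leq_trans hn; exact: leq_maxl.
have [hA1 hn1] := hN1 n (leq_trans (leq_trans (leq_maxl _ _) (leq_maxr _ _)) hn).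
have [hA2 _] := hN2 n (leq_trans (leq_trans (leq_maxr _ _) (leq_maxr _ _)) hn).
have hn0 : 0 < INR n by lra.
set x := Rpower (INR n) (INR r - e2).
have hx1 : 1 <= x by apply: Rpower_ge1; lra.
set m := cl x.
have [hm1 hm2] := cl_spec (x := x) ltac:(lra).
rewrite -/m in hm1 hm2.
have hm2x : INR m <= 2 * x by lra.
have hmge1 : (1 <= m)%N by apply: INR_lenP'; simpl; lra.
set M := 'C(n, r).
have hM := M_lower h2r. rewrite -/M in hM. change (2 ^ r * INR r`!) with K0 in hM.
have hnr : INR n ^ r = x * Rpower (INR n) e2.
  rewrite /x -Rpower_plus -Rpower_pow //; congr Rpower; ring.
have hbig : K0 * (10 * x + 2 * TK) <= INR M * K0.
  have h1 : K0 * (10 * x + 2 * TK) <= x * (K0 * (10 + 2 * TK)).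
    have q1 : 0 <= K0 * 2 * TK by apply: Rmult_le_pos => //; lra.
    have q2 : 0 <= (x - 1) * (K0 * 2 * TK) by apply: Rmult_le_pos; lra.
    have q3 : 0 <= (x - 1) * (K0 * 10) by apply: Rmult_le_pos; lra.
    lra.
  have h2 : x * (K0 * (10 + 2 * TK)) <= x * Rpower (INR n) e2 by apply: Rmult_le_compat_l; lra.
  lra.
have hbig2 : 10 * x + 2 * TK <= INR M by apply: (Rmult_le_reg_l K0); lra.
have hI2 : INR 2 = 2 by [].
have hKM : (2 * tt K <= M)%N by apply: INR_lenP'; rewrite INR_muln hI2 -/TK; lra.
have hmM : (m <= M)%N by apply: INR_lenP'; lra.
have h4 : (4 * m <= M - m)%N.
  apply: INR_lenP'; rewrite INR_muln minus_INR; last by apply/leP; lia.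
  have h44 : INR 4 = 4 by rewrite INR_IZR_INZ. rewrite h44. lra.
have hW : forall k, (k <= K)%N ->
   2 * INR K.+1 * INR n ^ k * (2 * K0 * INR K ^ r * (2 * x) / INR n ^ r) ^ tt k <= 1.
  move=> k hk.
  set t := tt k.
  have [ht1 _] := tt_spec hr hc k. rewrite -/t in ht1.
  have htK : (t <= tt K)%N by exact: (tt_mono hr hc hk).
  have ht0 : (1 <= t)%N by exact: tt_pos hr hc k.
  have ht0' : 1 <= INR t by exact: (INR_lenP ht0).
  set B0 := 4 * K0 * INR K ^ r.
  have hB0 : 0 <= B0 by apply: Rmult_le_pos; [lra| apply: pow_le; exact: pos_INR].
  have eW : 2 * K0 * INR K ^ r * (2 * x) / INR n ^ r = B0 * Rpower (INR n) (- e2).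
    rewrite hnr /B0 Rpower_Ropp; field; split; [apply: Rgt_not_eq; exact: Rpower_pos | lra].
  rewrite eW Rpow_mult_distr Rpower_pow_t.
  rewrite -(Rpower_pow k (INR n) hn0).
  have hexp : INR k + INR t * - e2 <= - g.
    have : INR k < INR t / c.
      apply: (Rmult_lt_reg_r c) => //.
      have -> : INR t / c * c = INR t by field; lra. lra.
    have : INR t * (1 / c) = INR t / c by field; lra.
    have : g * 1 <= g * INR t by apply: Rmult_le_compat_l; lra.
    rewrite /g; nra.
  have hR : Rpower (INR n) (INR k) * Rpower (INR n) (INR t * - e2) <= Rpower (INR n) (- g).
    rewrite -Rpower_plus; apply: Rle_Rpower => //; lra.
  have hBt : B0 ^ t <= B ^ tt K.
    apply: (Rle_trans _ (B ^ t)).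
      apply: pow_incr; split => //; rewrite /B /B0; lra.
    apply: Rle_pow => //; apply/leP; exact: htK.
  have hg1 : 2 * INR K.+1 * B ^ tt K * Rpower (INR n) (- g) <= 1.
    rewrite Rpower_Ropp.
    have hp := Rpower_pos (INR n) g.
    apply: (Rmult_le_reg_r (Rpower (INR n) g)) => //.
    have -> : 2 * INR K.+1 * B ^ tt K * / Rpower (INR n) g * Rpower (INR n) g = 2 * INR K.+1 * B ^ tt K.
      field; lra.
    lra.
  have hK1 : 0 <= 2 * INR K.+1 by have := pos_INR K.+1; lra.
  have hBt0 : 0 <= B0 ^ t by apply: pow_le.
  have hRp := Rpower_pos (INR n) (INR k).
  have hRp2 := Rpower_pos (INR n) (INR t * - e2).
  have hRp3 := Rpower_pos (INR n) (- g).
  have h1 : Rpower (INR n) (INR k) * (B0 ^ t * Rpower (INR n) (INR t * - e2))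
     <= B ^ tt K * Rpower (INR n) (- g).
    have -> : Rpower (INR n) (INR k) * (B0 ^ t * Rpower (INR n) (INR t * - e2))
       = B0 ^ t * (Rpower (INR n) (INR k) * Rpower (INR n) (INR t * - e2)) by ring.
    apply: Rmult_le_compat => //; nra.
  have h2 : 2 * INR K.+1 * (Rpower (INR n) (INR k) * (B0 ^ t * Rpower (INR n) (INR t * - e2)))
     <= 2 * INR K.+1 * (B ^ tt K * Rpower (INR n) (- g)) by apply: Rmult_le_compat_l.
  rewrite !Rmult_assoc in h2 hg1 *. lra.
have hcond := @cond_real r c hr hc n m K (2 * x) h2r hKM hm2x hW.
have hh := goodhalf hr hc hKM hmM hcond.
have hbl := bin_lower M m hmM.
have hfin := nat_final hmge1 h4 hmM hbl hh.
apply: (Rle_trans _ (INR (2 ^ m)%N)); last exact: INR_lenP hfin.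
rewrite INR_expn -Rpower_pow; last lra.
apply: Rle_Rpower; first lra.
apply: (Rle_trans _ x); last lra.
rewrite /x; apply: Rle_Rpower; lra.
Qed.

End Main7.

Section Final.
Variables (r : nat) (c eps : R).
Hypothesis hr : (2 <= r)%N.
Hypothesis hc : 1 / (INR r - 1) <= c.
Hypothesis heps : 1 / c < eps.
Local Notation tt := (tt c).

Definition dlt (j : nat) : R := c / (INR j + 2).

Definition Good (j K n : nat) : Prop :=
  (K < n)%N /\
  ((fl ((c - dlt j / 2) * INR n) < tt n)%N /\
   Rpower (INR n) ((INR r - 1) * (c - dlt j) * INR n)
     <= INR #|goodset r n (fl ((c - dlt j / 2) * INR n)) K tt|) /\
  (INR #|[set E : {set {set 'I_n}} | E \subset rsets r n & (#|E| <= (tt n).-1)%N]|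
     <= Rpower (INR n) ((INR r - 1) * (c + dlt j) * INR n)) /\
  (Rpower 2 (Rpower (INR n.-1) (INR r - eps)) <=
     INR #|goodset r n.-1 (cl (Rpower (INR n.-1) (INR r - Rmin eps (INR r - 1/2)))) K tt|).

Lemma dlt_pos j : 0 < dlt j.
Proof. rewrite /dlt; apply: Rdiv_lt_0_compat; [exact: c_pos hr hc | have := pos_INR j; lra]. Qed.

Lemma dlt_le j : dlt j <= c.
Proof.
have hc0 := c_pos hr hc. rewrite /dlt.
have hj := pos_INR j.
apply: (Rmult_le_reg_r (INR j + 2)); first lra.
have -> : c / (INR j + 2) * (INR j + 2) = c by field; lra.
nra.
Qed.

Lemma exGood j K : exists n, Good j K n.
Proof.
have [N1 h1] := LowS hr hc K (dlt_pos j) (dlt_le j).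
have [N2 h2] := UpS hr hc (dlt_pos j).
have [N3 h3] := Big hr hc heps K.
exists (maxn K.+1 (maxn N1 (maxn N2 N3.+1))).
set n := maxn _ _.
have hK : (K < n)%N by exact: leq_maxl.
have hN1 : (N1 <= n)%N by apply: leq_trans (leq_maxr _ _); exact: leq_maxl.
have hN2 : (N2 <= n)%N by apply: leq_trans (leq_maxr _ _); apply: leq_trans (leq_maxr _ _); exact: leq_maxl.
have hN3 : (N3.+1 <= n)%N by apply: leq_trans (leq_maxr _ _); apply: leq_trans (leq_maxr _ _); exact: leq_maxr.
split => //; split; first exact: h1.
split; first exact: h2.
apply: h3; lia.
Qed.

Fixpoint sq (j : nat) : nat :=
  match j with
  | 0%N => 0%N
  | j'.+1 => proj1_sig (constructive_indefinite_description _ (exGood j' (sq j')))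
  end.

Lemma sq_spec j : Good j (sq j) (sq j.+1).
Proof. rewrite /=. exact: proj2_sig (constructive_indefinite_description _ (exGood j (sq j))). Qed.

Lemma sq_lt j : (sq j < sq j.+1)%N.
Proof. by case: (sq_spec j). Qed.

Lemma sq_mono i j : (i < j)%N -> (sq i < sq j)%N.
Proof.
elim: j => [|j IH] //. rewrite ltnS leq_eqVlt => /orP [/eqP ->|h]; first exact: sq_lt.
exact: ltn_trans (IH h) (sq_lt j).
Qed.

Lemma sq_ge j : (j <= sq j)%N.
Proof. elim: j => [|j IH] //. exact: leq_ltn_trans IH (sq_lt j). Qed.

Lemma sq_inv i j : (sq i <= sq j)%N -> (i <= j)%N.
Proof. move=> h; rewrite leqNgt; apply/negP => hji; have := sq_mono hji; lia. Qed.

Lemma sq_le_mono i j : (i <= j)%N -> (sq i <= sq j)%N.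
Proof. rewrite leq_eqVlt => /orP [/eqP ->|h] //. exact: ltnW (sq_mono h). Qed.

Definition Sdef (n : nat) : Prop := exists j, sq j = n.
Definition Sb (n : nat) : bool := if excluded_middle_informative (Sdef n) then true else false.

Lemma SbP n : Sb n -> Sdef n.
Proof. by rewrite /Sb; case: excluded_middle_informative. Qed.
Lemma SbT n : Sdef n -> Sb n.
Proof. by rewrite /Sb; case: excluded_middle_informative. Qed.

Definition Pdef (n : nat) : pred {set {set 'I_n}} :=
  fun G => uniform_hg r G && [forall U : {set 'I_n}, Sb #|U| ==> (ein G U < tt #|U|)%N].

Lemma hered : hereditary_prop r Pdef.
Proof.
split; first by move=> n G /andP [].
move=> m n g ig G /andP [hu /forallP hf].
apply/andP; split.
  rewrite uniformE; apply: pullback_uniform => //; by rewrite -uniformE.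
apply/forallP => U; apply/implyP => hU.
apply: leq_ltn_trans (pullback_ein G U ig) _.
have := hf (g @: U); rewrite card_imset // hU /=; by [].
Qed.

Lemma ein_le n (E : {set {set 'I_n}}) U : (ein E U <= #|E|)%N.
Proof. apply: subset_leq_card; apply/subsetP => e; rewrite inE => /andP []. done. Qed.

Lemma good_in_P n m K :
  (forall s, Sdef s -> (s <= n)%N -> (s <= K)%N \/ (s = n /\ (m < tt n)%N)) ->
  goodset r n m K tt \subset [set G | Pdef G].
Proof.
move=> hS; apply/subsetP => E; rewrite !inE => /andP [/andP [hER /eqP hEm] /forallP hf].
apply/andP; split; first by rewrite uniformE.
apply/forallP => U; apply/implyP => hU.
have hUn : (#|U| <= n)%N by rewrite -[X in (_ <= X)%N](card_ord n); exact: max_card.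
case: (hS _ (SbP hU) hUn) => [hK|[e hm]].
  by move: (hf U); rewrite hK.
rewrite e; apply: leq_ltn_trans (ein_le E U) _; by rewrite hEm.
Qed.

Lemma P_in_small n : Sdef n ->
  [set G | Pdef G] \subset [set E : {set {set 'I_n}} | E \subset rsets r n & (#|E| <= (tt n).-1)%N].
Proof.
move=> hn; apply/subsetP => G; rewrite !inE => /andP [hu /forallP hf].
rewrite -uniformE hu /=.
have := hf [set: 'I_n]; rewrite cardsT card_ord (SbT hn) /=.
have -> : ein G [set: 'I_n] = #|G|.
  rewrite /ein.
  have -> : [set e in G | e \subset [set: 'I_n]] = G by apply/setP => e; rewrite !inE subsetT andbT.
  done.
move=> h; rewrite -ltnS prednK //; exact: tt_pos hr hc n.
Qed.

End Final.

Theorem theorem1p5 (r : nat) (c eps : R) :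
  (2 <= r)%nat -> 1 / (INR r - 1) <= c -> 1 / c < eps ->
  exists (P : forall n : nat, pred {set {set 'I_n}}) (S : nat -> Prop),
    hereditary_prop r P /\
    (forall m : nat, exists n : nat, (m <= n)%nat /\ S n) /\
    (forall delta : R, 0 < delta -> exists N : nat, forall n : nat,
       S n -> (N <= n)%nat ->
       Rpower (INR n) ((INR r - 1) * (c - delta) * INR n) <= INR (Hn P n) /\
       INR (Hn P n) <= Rpower (INR n) ((INR r - 1) * (c + delta) * INR n)) /\
    (forall m : nat, exists n : nat, (m <= n)%nat /\
       Rpower 2 (Rpower (INR n) (INR r - eps)) <= INR (Hn P n)).
Proof.
move=> hr hc heps.
exists (@Pdef r c eps hr hc heps), (@Sdef r c eps hr hc heps).
set sq' := sq hr hc heps.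
have hc0 := c_pos hr hc. have hr1 := r1_pos hr.
split; first exact: hered.
split; first by move=> m; exists (sq' m); split; [exact: sq_ge | by exists m].
split.
  move=> delta hd.
  set j0 := cl (c / delta).
  have [hj0 _] := cl_spec (x := c / delta) ltac:(apply: Rlt_le; apply: Rdiv_lt_0_compat; lra).
  rewrite -/j0 in hj0.
  exists (sq' j0).+1 => n [j hj] hn.
  have hjj : (j0 < j)%N.
    rewrite ltnNge; apply/negP => h; have := sq_le_mono hr hc heps h. rewrite /sq' in hn. lia.
  case: j hj hjj => [|i] // hj hji.
  have hi : (j0 <= i)%N by lia.
  have [_ [[hmt hlow] [hup _]]] := sq_spec hr hc heps i.
  rewrite hj in hmt hlow hup.
  have hdi : dlt c i <= delta.
    have hi' := INR_lenP hi.
    have hi2 : 0 < INR i + 2 by have := pos_INR i; lra.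
    have h1 : c / delta < INR i + 2 by lra.
    have h2 : c < delta * (INR i + 2).
      have : c / delta * delta < (INR i + 2) * delta by apply: Rmult_lt_compat_r.
      have -> : c / delta * delta = c by field; lra.
      lra.
    rewrite /dlt; apply: Rlt_le; apply: (Rmult_lt_reg_r (INR i + 2)) => //.
    have -> : c / (INR i + 2) * (INR i + 2) = c by field; lra.
    lra.
  have hn1 : 1 <= INR n.
    have h := sq_ge hr hc heps i.+1. rewrite hj in h.
    have h1 : (1 <= n)%N by lia.
    exact: (INR_lenP h1).
  have hSn : @Sdef r c eps hr hc heps n by exists i.+1.
  have hex1 : (INR r - 1) * (c - delta) * INR n <= (INR r - 1) * (c - dlt c i) * INR n.
    apply: Rmult_le_compat_r; first lra. apply: Rmult_le_compat_l; lra.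
  have hex2 : (INR r - 1) * (c + dlt c i) * INR n <= (INR r - 1) * (c + delta) * INR n.
    apply: Rmult_le_compat_r; first lra. apply: Rmult_le_compat_l; lra.
  split.
    apply: (Rle_trans _ _ _ (Rle_Rpower _ _ _ hn1 hex1)).
    apply: (Rle_trans _ _ _ hlow).
    apply: INR_lenP; rewrite /Hn; apply: subset_leq_card; apply: good_in_P.
    move=> s [l <-] hsl.
    have hl : (l <= i.+1)%N by rewrite -hj in hsl; exact: (sq_inv hsl).
    move: hl; rewrite leq_eqVlt => /orP [/eqP el|hl].
      by right; rewrite el hj.
    by left; apply: sq_le_mono.
  apply: (Rle_trans _ _ _ _ (Rle_Rpower _ _ _ hn1 hex2)).
  apply: Rle_trans hup; apply: INR_lenP; rewrite /Hn; apply: subset_leq_card.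
  exact: P_in_small hSn.
move=> m.
have [hlt [_ [_ hbig]]] := sq_spec hr hc heps m.
set K := sq hr hc heps m in hlt hbig.
set n1 := sq hr hc heps m.+1 in hlt hbig.
exists n1.-1; split.
  have := sq_ge hr hc heps m.+1; rewrite -/n1; lia.
apply: (Rle_trans _ _ _ hbig).
apply: INR_lenP; rewrite /Hn; apply: subset_leq_card; apply: good_in_P.
move=> s [l <-] hsl; left.
have hl : (l <= m)%N.
  rewrite leqNgt; apply/negP => h; have := sq_le_mono hr hc heps h; rewrite -/n1; lia.
exact: sq_le_mono.
Qed.
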